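(* Let $\underline R$ be a Green functor and $\underline S$ an $\underline R$-algebra (a Green functor with a Green functor map $\underline R\to\underline S$). Then there is an isomorphism of $\underline S$-modules $\underline{\operatorname{HH}}_1(\underline S/\underline R)\cong\Omega^{1,G}_{\underline S/\underline R}$, given on generators by $s_1\otimes s_2\mapsto s_1\,d(s_2)$ for $s_1,s_2\in\underline S(G/H)$.
   Context: Green functors for a finite group $G$ are commutative monoids in Mackey functors under the box product. $\underline{\operatorname{HH}}_*(\underline S/\underline R)$ is the homology of the cyclic nerve $[k]\mapsto\underline S\boxtimes_{\underline R}\underline S^{\boxtimes_{\underline R}k}$ (faces given by multiplying adjacent factors, the last face moving the last factor to the front and multiplying), so $\underline{\operatorname{HH}}_1(\underline S/\underline R)=(\underline S\boxtimes_{\underline R}\underline S)/\operatorname{im}(b)$ with $b(s_1\otimes s_2\otimes s_3)=s_1s_2\otimes s_3-s_1\otimes s_2s_3+s_3s_1\otimes s_2$. An $\underline R$-derivation $d:\underline S\to\underline M$ into an $\underline S$-module is a map of Mackey functors vanishing on the image of $\underline R$ and satisfying $d(s_1s_2)=s_1d(s_2)+s_2d(s_1)$ at each level. $\Omega^{1,G}_{\underline S/\underline R}$ (genuine Kähler differentials, which for Green functors is $\underline I/\underline I^{>1}$ with $\underline I=\ker(\underline S\boxtimes_{\underline R}\underline S\to\underline S)$) is the $\underline S$-module with universal derivation $d:\underline S\to\Omega^{1,G}_{\underline S/\underline R}$, $d(s)=[s\otimes1-1\otimes s]$, corepresenting $\underline R$-derivations. *)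

(* Defs.v *)
From HB Require Import structures.
From mathcomp Require Import all_boot all_order all_algebra all_fingroup.
Set Implicit Arguments. Unset Strict Implicit. Unset Printing Implicit Defensive.
Import GRing.Theory.
Local Open Scope ring_scope.

Section Mackey.
Variables (gT : finGroupType) (G : {group gT}).

(* A Mackey functor for G, indexed by subgroups H of G (values at groups not
   contained in G are irrelevant junk).  [res H K] is restriction from H to
   K <= H, [tr K H] is transfer (induction) from K <= H to H, and
   [cj g H K] is conjugation M(H) -> M(K), meaningful when K = H :^ g. *)
Record mackey_axioms (V : {group gT} -> zmodType)
  (res : forall H K : {group gT}, V H -> V K)
  (tr : forall K H : {group gT}, V K -> V H)
  (cj : forall (g : gT) (H K : {group gT}), V H -> V K) : Prop := {
  res_sub : forall (H K : {group gT}) x y, H \subset G -> K \subset H ->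
    res H K (x - y) = res H K x - res H K y;
  tr_sub : forall (K H : {group gT}) x y, H \subset G -> K \subset H ->
    tr K H (x - y) = tr K H x - tr K H y;
  cj_sub : forall g (H K : {group gT}) x y, H \subset G -> g \in G ->
    K :=: (H :^ g)%g -> cj g H K (x - y) = cj g H K x - cj g H K y;
  res_id : forall (H : {group gT}) x, H \subset G -> res H H x = x;
  tr_id : forall (H : {group gT}) x, H \subset G -> tr H H x = x;
  res_comp : forall (H K L : {group gT}) x, H \subset G -> K \subset H ->
    L \subset K -> res K L (res H K x) = res H L x;
  tr_comp : forall (H K L : {group gT}) x, H \subset G -> K \subset H ->
    L \subset K -> tr K H (tr L K x) = tr L H x;
  cj_inner : forall (H : {group gT}) h x, H \subset G -> h \in H ->
    cj h H H x = x;
  cj_comp : forall g g' (H K L : {group gT}) x, H \subset G -> g \in G ->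
    g' \in G -> K :=: (H :^ g)%g -> L :=: (K :^ g')%g ->
    cj g' K L (cj g H K x) = cj (g * g')%g H L x;
  cj_res : forall g (H K H' K' : {group gT}) x, H \subset G -> K \subset H ->
    g \in G -> H' :=: (H :^ g)%g -> K' :=: (K :^ g)%g ->
    cj g K K' (res H K x) = res H' K' (cj g H H' x);
  cj_tr : forall g (H K H' K' : {group gT}) x, H \subset G -> K \subset H ->
    g \in G -> H' :=: (H :^ g)%g -> K' :=: (K :^ g)%g ->
    cj g H H' (tr K H x) = tr K' H' (cj g K K' x);
  mackey_formula : forall (H K L : {group gT}) (X : {set gT}) x,
    H \subset G -> K \subset H -> L \subset H -> X \subset H ->
    (forall h, h \in H -> exists! y, y \in X /\ h \in (K :* y * L)%g) ->
    res H L (tr K H x) =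
      \sum_(y in X) tr (K :^ y :&: L)%G L
         (cj y (K :&: L :^ y^-1)%G (K :^ y :&: L)%G
            (res K (K :&: L :^ y^-1)%G x)) }.

Record mackey := Mackey {
  mk :> {group gT} -> zmodType;
  mres : forall H K : {group gT}, mk H -> mk K;
  mtr : forall K H : {group gT}, mk K -> mk H;
  mcj : forall (g : gT) (H K : {group gT}), mk H -> mk K;
  mk_ax : mackey_axioms mres mtr mcj }.

(* Green functors (commutative monoids for the box product), written out
   concretely (Dress): levelwise commutative rings, restriction and
   conjugation are ring maps, Frobenius reciprocity for transfers. *)
Record green_axioms (V : {group gT} -> comPzRingType)
  (res : forall H K : {group gT}, V H -> V K)
  (tr : forall K H : {group gT}, V K -> V H)
  (cj : forall (g : gT) (H K : {group gT}), V H -> V K) : Prop := {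
  res1 : forall (H K : {group gT}), H \subset G -> K \subset H -> res H K 1 = 1;
  resM : forall (H K : {group gT}) x y, H \subset G -> K \subset H ->
    res H K (x * y) = res H K x * res H K y;
  cj1 : forall g (H K : {group gT}), H \subset G -> g \in G ->
    K :=: (H :^ g)%g -> cj g H K 1 = 1;
  cjM : forall g (H K : {group gT}) x y, H \subset G -> g \in G ->
    K :=: (H :^ g)%g -> cj g H K (x * y) = cj g H K x * cj g H K y;
  frobenius : forall (H K : {group gT}) (a : V K) (b : V H),
    H \subset G -> K \subset H -> tr K H (a * res H K b) = tr K H a * b }.

Record green := Green {
  gval :> {group gT} -> comPzRingType;
  gres : forall H K : {group gT}, gval H -> gval K;
  gtr : forall K H : {group gT}, gval K -> gval H;
  gcj : forall (g : gT) (H K : {group gT}), gval H -> gval K;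
  g_mackey : mackey_axioms (V := fun H => gval H : zmodType) gres gtr gcj;
  g_green : green_axioms gres gtr gcj }.

Definition green_mackey (S : green) : mackey :=
  @Mackey (fun H => S H : zmodType) (@gres S) (@gtr S) (@gcj S) (g_mackey S).

Definition is_mackey_map (M N : mackey) (h : forall H, M H -> N H) : Prop :=
  [/\ forall (H : {group gT}) x y, H \subset G -> h H (x - y) = h H x - h H y,
      forall (H K : {group gT}) x, H \subset G -> K \subset H ->
        h K (mres K x) = mres K (h H x),
      forall (K H : {group gT}) x, H \subset G -> K \subset H ->
        h H (mtr H x) = mtr H (h K x)
    & forall g (H K : {group gT}) x, H \subset G -> g \in G ->
        K :=: (H :^ g)%g -> h K (mcj g K x) = mcj g K (h H x)].

Definition is_green_map (R S : green) (f : forall H, R H -> S H) : Prop :=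
  [/\ is_mackey_map (M := green_mackey R) (N := green_mackey S) f,
      forall H : {group gT}, H \subset G -> f H 1 = 1
    & forall (H : {group gT}) x y, H \subset G -> f H (x * y) = f H x * f H y].

Definition is_module (S : green) (M : mackey)
  (act : forall H, S H -> M H -> M H) : Prop :=
  
  (forall (H : {group gT}) (a b : S H) m, H \subset G ->
        act H (a - b) m = act H a m - act H b m) /\
  (forall (H : {group gT}) a (m n : M H), H \subset G ->
        act H a (m - n) = act H a m - act H a n) /\
  (forall (H : {group gT}) m, H \subset G -> act H 1 m = m) /\
  (forall (H : {group gT}) a b m, H \subset G ->
        act H (a * b) m = act H a (act H b m)) /\
  (forall (H K : {group gT}) a m, H \subset G -> K \subset H ->
        mres K (act H a m) = act K (gres K a) (mres K m)) /\
  (forall g (H K : {group gT}) a m, H \subset G -> g \in G ->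
        K :=: (H :^ g)%g -> mcj g K (act H a m) = act K (gcj g K a) (mcj g K m)) /\
  (forall (H K : {group gT}) (a : S K) (m : M H), H \subset G -> K \subset H ->
        mtr H (act K a (mres K m)) = act H (gtr H a) m) /\
  (forall (H K : {group gT}) (a : S H) (m : M K), H \subset G -> K \subset H ->
        mtr H (act K (gres K a) m) = act H a (mtr H m)).

Definition is_module_map (S : green) (M N : mackey)
  (actM : forall H, S H -> M H -> M H) (actN : forall H, S H -> N H -> N H)
  (h : forall H, M H -> N H) : Prop :=
  is_mackey_map h /\
  forall (H : {group gT}) a m, H \subset G -> h H (actM H a m) = actN H a (h H m).

Definition is_balanced_pairing (R : green) (M N P : mackey)
  (actM : forall H, R H -> M H -> M H) (actN : forall H, R H -> N H -> N H)
  (nu : forall H, M H -> N H -> P H) : Prop :=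
  
  (forall (H : {group gT}) m m' n, H \subset G ->
        nu H (m - m') n = nu H m n - nu H m' n) /\
  (forall (H : {group gT}) m n n', H \subset G ->
        nu H m (n - n') = nu H m n - nu H m n') /\
  (forall (H : {group gT}) r m n, H \subset G ->
        nu H (actM H r m) n = nu H m (actN H r n)) /\
  (forall (H K : {group gT}) m n, H \subset G -> K \subset H ->
        mres K (nu H m n) = nu K (mres K m) (mres K n)) /\
  (forall g (H K : {group gT}) m n, H \subset G -> g \in G ->
        K :=: (H :^ g)%g -> mcj g K (nu H m n) = nu K (mcj g K m) (mcj g K n)) /\
  (forall (H K : {group gT}) (m : M K) (n : N H), H \subset G -> K \subset H ->
        mtr H (nu K m (mres K n)) = nu H (mtr H m) n) /\
  (forall (H K : {group gT}) (m : M H) (n : N K), H \subset G -> K \subset H ->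
        mtr H (nu K (mres K m) n) = nu H m (mtr H n)).

Definition is_box_product (R : green) (M : mackey)
  (actM : forall H, R H -> M H -> M H) (N : mackey)
  (actN : forall H, R H -> N H -> N H) (T : mackey)
  (mu : forall H, M H -> N H -> T H) : Prop :=
  is_balanced_pairing actM actN mu /\
  forall (P : mackey) (nu : forall H, M H -> N H -> P H),
    is_balanced_pairing actM actN nu ->
    exists h : forall H, T H -> P H,
      [/\ is_mackey_map h,
          forall (H : {group gT}) m n, H \subset G -> h H (mu H m n) = nu H m n
        & forall h' : forall H, T H -> P H, is_mackey_map h' ->
            (forall (H : {group gT}) m n, H \subset G -> h' H (mu H m n) = nu H m n) ->
            forall (H : {group gT}) t, H \subset G -> h' H t = h H t].

(* R-derivations S -> M into an S-module, where f : R -> S is the structure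
   map of the R-algebra S. *)
Definition is_derivation (R S : green) (f : forall H, R H -> S H) (M : mackey)
  (act : forall H, S H -> M H -> M H) (d : forall H, S H -> M H) : Prop :=
  [/\ is_mackey_map (M := green_mackey S) (N := M) d,
      forall (H : {group gT}) r, H \subset G -> d H (f H r) = 0
    & forall (H : {group gT}) a b, H \subset G ->
        d H (a * b) = act H a (d H b) + act H b (d H a)].

Definition is_kaehler (R S : green) (f : forall H, R H -> S H) (Om : mackey)
  (actO : forall H, S H -> Om H -> Om H) (d : forall H, S H -> Om H) : Prop :=
  [/\ is_module actO, is_derivation f actO d &
  forall (N : mackey) (actN : forall H, S H -> N H -> N H)
         (delta : forall H, S H -> N H),
    is_module actN -> is_derivation f actN delta ->
    exists h : forall H, Om H -> N H,
      [/\ is_module_map actO actN h,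
          forall (H : {group gT}) a, H \subset G -> h H (d H a) = delta H a
        & forall h' : forall H, Om H -> N H, is_module_map actO actN h' ->
            (forall (H : {group gT}) a, H \subset G -> h' H (d H a) = delta H a) ->
            forall (H : {group gT}) t, H \subset G -> h' H t = h H t]].

End Mackey.

(* Main.v *)
Require Import Defs.
From HB Require Import structures.
From mathcomp Require Import all_boot all_order all_algebra all_fingroup.
From Stdlib Require ClassicalEpsilon FunctionalExtensionality PropExtensionality.
Import GRing.Theory.
Local Open Scope ring_scope.
Set Implicit Arguments. Unset Strict Implicit. Unset Printing Implicit Defensive.
Local Open Scope ring_scope.

Section ZQuot.
Variables (M : zmodType) (P : M -> Prop).
Hypothesis P0 : P 0.
Hypothesis PB : forall x y, P x -> P y -> P (x - y).

Lemma PN x : P x -> P (- x).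
Proof. by move=> Px; rewrite -sub0r; apply: PB. Qed.
Lemma PD x y : P x -> P y -> P (x + y).
Proof. by move=> Px Py; rewrite -(opprK y); apply: PB => //; apply: PN. Qed.

Definition canon (x : M) : M := ClassicalEpsilon.epsilon (inhabits (0:M)) (fun y => P (x - y)).

Lemma canonP x : P (x - canon x).
Proof.
have := @ClassicalEpsilon.epsilon_spec M (inhabits (0:M)) (fun y => P (x - y)).
apply. exists x. by rewrite subrr. Qed.

Lemma canon_eq x y : P (x - y) -> canon x = canon y.
Proof.
move=> Pxy; rewrite /canon.
suff -> : (fun z => P (x - z)) = (fun z => P (y - z)) by [].
apply: FunctionalExtensionality.functional_extensionality => z; apply: PropExtensionality.propositional_extensionality; split=> H.
  have -> : y - z = (x - z) - (x - y) by rewrite opprB [RHS]addrC addrA subrK.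
  exact: PB.
have -> : x - z = (x - y) + (y - z) by rewrite addrA subrK.
exact: PD.
Qed.

Lemma canonK x : canon (canon x) = canon x.
Proof. apply: canon_eq; rewrite -opprB; apply: PN; exact: canonP. Qed.

Definition quot_of of (P 0) & (forall x y, P x -> P y -> P (x - y)) := {x : M | canon x == x}.
Local Notation quot := (quot_of P0 PB).
HB.instance Definition _ := Choice.copy quot {x : M | canon x == x}.

Definition zval (q : quot) : M := proj1_sig q.
Definition zpi (x : M) : quot := exist _ (canon x) (introT eqP (canonK x)).

Lemma zpiP x y : zpi x = zpi y <-> P (x - y).
Proof.
split=> [/(congr1 val)/= e | /canon_eq e]; last by apply: val_inj.
have -> : x - y = (x - canon x) - (y - canon y) by rewrite e opprB addrA subrK.
by apply: PB; apply: canonP.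
Qed.

Lemma zvalK (q : quot) : zpi (zval q) = q.
Proof. by apply: val_inj => /=; case: q => x /= /eqP. Qed.

Lemma zval_pi x : P (zval (zpi x) - x).
Proof. rewrite -opprB; apply: PN; exact: canonP. Qed.

Definition qzero := zpi 0.
Definition qopp (q : quot) := zpi (- val q).
Definition qadd (q r : quot) := zpi (val q + val r).

Lemma pi_opp x : qopp (zpi x) = zpi (- x).
Proof. by apply/zpiP; rewrite -opprD; apply: PN; apply: zval_pi. Qed.
Lemma pi_add x y : qadd (zpi x) (zpi y) = zpi (x + y).
Proof.
apply/zpiP; have -> : val (zpi x) + val (zpi y) - (x + y) = (val (zpi x) - x) + (val (zpi y) - y).
  by rewrite opprD addrACA.
by apply: PD; apply: zval_pi.
Qed.

Lemma qaddA : associative qadd.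
Proof. by move=> x y z; rewrite -[x]zvalK -[y]zvalK -[z]zvalK !pi_add addrA. Qed.
Lemma qaddC : commutative qadd.
Proof. by move=> x y; rewrite -[x]zvalK -[y]zvalK !pi_add addrC. Qed.
Lemma qadd0 : left_id qzero qadd.
Proof. by move=> x; rewrite -[x]zvalK /qzero pi_add add0r. Qed.
Lemma qaddN : left_inverse qzero qopp qadd.
Proof. by move=> x; rewrite -[x]zvalK pi_opp pi_add addNr. Qed.

HB.instance Definition _ := GRing.isZmodule.Build quot qaddA qaddC qadd0 qaddN.

Lemma zpiB x y : zpi (x - y) = zpi x - zpi y.
Proof. by rewrite -pi_add -pi_opp. Qed.
Lemma zpi0 : zpi 0 = 0. Proof. by []. Qed.
Lemma zpi_eq0 x : zpi x = 0 <-> P x.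
Proof. by rewrite -zpi0 zpiP subr0. Qed.
End ZQuot.
Notation quot P0 PB := (quot_of P0 PB).

Local Open Scope ring_scope.

Section MackeyBasics.
Variables (gT : finGroupType) (G : {group gT}) (M : mackey G).

Lemma res0 (H K : {group gT}) : H \subset G -> K \subset H -> mres K (0 : M H) = 0.
Proof. move=> hH hK; have := res_sub (mk_ax M) (0 : M H) 0 hH hK; by rewrite subr0 subrr. Qed.
Lemma tr0 (K H : {group gT}) : H \subset G -> K \subset H -> mtr H (0 : M K) = 0.
Proof. move=> hH hK; have := tr_sub (mk_ax M) (0 : M K) 0 hH hK; by rewrite subr0 subrr. Qed.
Lemma cj0 g (H K : {group gT}) : H \subset G -> g \in G -> K :=: (H :^ g)%g -> mcj g K (0 : M H) = 0.
Proof. move=> hH hg hK; have := cj_sub (mk_ax M) (0 : M H) 0 hH hg hK; by rewrite subr0 subrr. Qed.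
Lemma resN (H K : {group gT}) x : H \subset G -> K \subset H -> mres K (- x : M H) = - mres K x.
Proof. by move=> hH hK; rewrite -sub0r (res_sub (mk_ax M)) // res0 // sub0r. Qed.
Lemma resD (H K : {group gT}) x y : H \subset G -> K \subset H -> mres K (x + y : M H) = mres K x + mres K y.
Proof. move=> hH hK; have -> : x + y = x - (- y) by rewrite opprK.
by rewrite (res_sub (mk_ax M)) // resN // opprK. Qed.
Lemma trN (K H : {group gT}) x : H \subset G -> K \subset H -> mtr H (- x : M K) = - mtr H x.
Proof. by move=> hH hK; rewrite -sub0r (tr_sub (mk_ax M)) // tr0 // sub0r. Qed.
Lemma trD (K H : {group gT}) x y : H \subset G -> K \subset H -> mtr H (x + y : M K) = mtr H x + mtr H y.
Proof. move=> hH hK; have -> : x + y = x - (- y) by rewrite opprK.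
by rewrite (tr_sub (mk_ax M)) // trN // opprK. Qed.
End MackeyBasics.

Unset Implicit Arguments.
Section MQuot.
Variables (gT : finGroupType) (G : {group gT}) (M : mackey G).
Variable P : forall H : {group gT}, M H -> Prop.
Hypothesis P0 : forall H : {group gT}, H \subset G -> P H 0.
Hypothesis PB : forall (H : {group gT}) x y, H \subset G -> P H x -> P H y -> P H (x - y).
Hypothesis Pres : forall (H K : {group gT}) x, H \subset G -> K \subset H -> P H x -> P K (mres K x).
Hypothesis Ptr : forall (K H : {group gT}) x, H \subset G -> K \subset H -> P K x -> P H (mtr H x).
Hypothesis Pcj : forall g (H K : {group gT}) x, H \subset G -> g \in G -> K :=: (H :^ g)%g ->
  P H x -> P K (mcj g K x).

Definition P' (H : {group gT}) (x : M H) := H \subset G -> P H x.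
Lemma P'0 (H : {group gT}) : P' H 0. Proof. by move=> hH; apply: P0. Qed.
Lemma P'B H x y : P' H x -> P' H y -> P' H (x - y).
Proof. by move=> px py hH; apply: PB => //; [apply: px | apply: py]. Qed.

Definition Qz (H : {group gT}) : zmodType := quot (@P'0 H) (@P'B H).
Definition qpi (H : {group gT}) (x : M H) : Qz H := zpi (@P'0 H) (@P'B H) x.

Lemma qpiB (H : {group gT}) x y : qpi H (x - y) = qpi H x - qpi H y. Proof. exact: (zpiB (@P'0 H) (@P'B H)). Qed.
Lemma qpi0 (H : {group gT}) : qpi H 0 = 0. Proof. by []. Qed.
Lemma qpiD (H : {group gT}) x y : qpi H (x + y) = qpi H x + qpi H y.
Proof. have -> : x + y = x - (0 - y) by rewrite sub0r opprK.
by rewrite !qpiB qpi0 sub0r opprK. Qed.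
Definition qval (H : {group gT}) (q : Qz H) : M H := @zval _ _ (@P'0 H) (@P'B H) q.
Lemma qvalK (H : {group gT}) (q : Qz H) : qpi H (qval H q) = q. Proof. exact (@zvalK _ _ (@P'0 H) (@P'B H) q). Qed.
Lemma qpiP (H : {group gT}) x y : H \subset G -> (qpi H x = qpi H y <-> P H (x - y)).
Proof.
move=> hH; rewrite /qpi zpiP; split; first by move=> p; apply: p.
by move=> p _.
Qed.
Lemma qpi_eq0 (H : {group gT}) x : H \subset G -> (qpi H x = 0 <-> P H x).
Proof. by move=> hH; rewrite -(qpi0 H) qpiP // subr0. Qed.
Lemma qval_pi (H : {group gT}) x : H \subset G -> P H (qval _ (qpi H x) - x).
Proof. by move=> hH; apply: (zval_pi (@P'0 H) (@P'B H)). Qed.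

Lemma qpi_resp (H K : {group gT}) (F : M H -> M K) :
  H \subset G -> K \subset G -> (forall x y, F (x - y) = F x - F y) ->
  (forall x, P H x -> P K (F x)) -> forall x, qpi K (F (qval _ (qpi H x))) = qpi K (F x).
Proof.
move=> hH hK FB FP x; apply/qpiP => //; rewrite -FB; apply: FP; exact: qval_pi.
Qed.

Definition qres (H K : {group gT}) (q : Qz H) : Qz K := qpi K (mres K (qval _ q)).
Definition qtr (K H : {group gT}) (q : Qz K) : Qz H := qpi H (mtr H (qval _ q)).
Definition qcj g (H K : {group gT}) (q : Qz H) : Qz K := qpi K (mcj g K (qval _ q)).

Lemma qresE (H K : {group gT}) x : H \subset G -> K \subset H -> qres H K (qpi H x) = qpi K (mres K x).
Proof.
move=> hH hK; apply: qpi_resp => //; first exact: subset_trans hK hH.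
  by move=> *; apply: (res_sub (mk_ax M)).
by move=> y; apply: Pres.
Qed.
Lemma qtrE (K H : {group gT}) x : H \subset G -> K \subset H -> qtr K H (qpi K x) = qpi H (mtr H x).
Proof.
move=> hH hK; apply: qpi_resp => //; first exact: subset_trans hK hH.
  by move=> *; apply: (tr_sub (mk_ax M)).
by move=> y; apply: Ptr.
Qed.
Lemma conj_sub g (H K : {group gT}) : H \subset G -> g \in G -> K :=: (H :^ g)%g -> K \subset G.
Proof. by move=> hH hg ->; rewrite -(conjGid hg) conjSg. Qed.
Lemma qcjE g (H K : {group gT}) x : H \subset G -> g \in G -> K :=: (H :^ g)%g ->
  qcj g H K (qpi H x) = qpi K (mcj g K x).
Proof.
move=> hH hg hK; apply: qpi_resp => //; first exact: conj_sub hK.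
  by move=> *; apply: (cj_sub (mk_ax M)).
by move=> y; apply: Pcj.
Qed.

Lemma qmackey_ax : mackey_axioms G qres qtr qcj.
Proof.
have E H (q : Qz H) : q = qpi H (qval _ q) by rewrite qvalK.
split.
- move=> H K x y hH hK; rewrite (E _ x) (E _ y) -qpiB !qresE // (res_sub (mk_ax M)) //.
  by rewrite qpiB.
- move=> K H x y hH hK; rewrite (E _ x) (E _ y) -qpiB !qtrE // (tr_sub (mk_ax M)) //.
  by rewrite qpiB.
- move=> g H K x y hH hg hK; rewrite (E _ x) (E _ y) -qpiB !qcjE // (cj_sub (mk_ax M)) //.
  by rewrite qpiB.
- by move=> H x hH; rewrite (E _ x) qresE // (res_id (mk_ax M)).
- by move=> H x hH; rewrite (E _ x) qtrE // (tr_id (mk_ax M)).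
- move=> H K L x hH hK hL; have hKG := subset_trans hK hH; have hLH := subset_trans hL hK.
  by rewrite (E _ x) !qresE // (res_comp (mk_ax M)).
- move=> H K L x hH hK hL; have hKG := subset_trans hK hH; have hLH := subset_trans hL hK.
  by rewrite (E _ x) !qtrE // (tr_comp (mk_ax M)).
- move=> H h x hH hh; have hhG : h \in G by apply: (subsetP hH).
  have hc : H :=: (H :^ h)%g by rewrite conjGid.
  by rewrite (E _ x) qcjE // (cj_inner (mk_ax M)).
- move=> g g' H K L x hH hg hg' hK hL; have hKG := conj_sub _ _ _ hH hg hK.
  have hgg : (g * g')%g \in G by rewrite groupM.
  have hL' : L :=: (H :^ (g * g'))%g by rewrite hL hK conjsgM.
  by rewrite (E _ x) !qcjE // (cj_comp (mk_ax M)).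
- move=> g H K H' K' x hH hK hg hH' hK'; have hKG := subset_trans hK hH.
  have hH'G := conj_sub _ _ _ hH hg hH'.
  have hKH' : K' \subset H' by rewrite hH' hK' conjSg.
  by rewrite (E _ x) qresE // !qcjE // qresE // (cj_res (mk_ax M) (H':=H') (K':=K')).
- move=> g H K H' K' x hH hK hg hH' hK'; have hKG := subset_trans hK hH.
  have hH'G := conj_sub _ _ _ hH hg hH'.
  have hKH' : K' \subset H' by rewrite hH' hK' conjSg.
  by rewrite (E _ x) qtrE // !qcjE // qtrE // (cj_tr (mk_ax M) (H':=H') (K':=K')).
- move=> H K L X x hH hK hL hX hXu; rewrite (E _ x) qtrE // qresE // (mackey_formula (mk_ax M) _ hH hK hL hX hXu).
  rewrite (big_morph (qpi L) (@qpiD L) (qpi0 L)); apply: eq_bigr => y yX.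
  have yH : y \in H by apply: (subsetP hX).
  have yG : y \in G by apply: (subsetP hH).
  have hKG : K \subset G by exact: subset_trans hK hH.
  have s1 : (K :&: L :^ y^-1)%G \subset K by rewrite /= subsetIl.
  have s2 : (K :^ y :&: L)%G \subset L by rewrite /= subsetIr.
  rewrite qresE // qcjE //; first rewrite qtrE //.
  + exact: subset_trans hL hH.
  + exact: subset_trans s1 hKG.
  + by rewrite /= conjIg conjsgKV.
Qed.

Definition QM : mackey G := @Mackey _ G Qz qres qtr qcj qmackey_ax.

Lemma qpi_mackey : is_mackey_map (M := M) (N := QM) qpi.
Proof.
split.
- by move=> H x y hH; rewrite qpiB.
- by move=> H K x hH hK; rewrite /= qresE.
- by move=> K H x hH hK; rewrite /= qtrE.
- by move=> g H K x hH hg hK; rewrite /= qcjE.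
Qed.

Section QModule.
Variables (S : green G) (act : forall H, S H -> M H -> M H).
Hypothesis hact : is_module act.
Hypothesis Pact : forall (H : {group gT}) (s : S H) (x : M H), H \subset G -> P H x -> P H (act H s x).

Definition mqact (H : {group gT}) (s : S H) (q : QM H) : QM H := qpi H (act H s (qval _ q)).

Lemma mqactE (H : {group gT}) (s : S H) (x : M H) : H \subset G -> mqact H s (qpi H x) = qpi H (act H s x).
Proof.
move=> hH; apply: qpi_resp => //; first by move=> y z; case: hact => _ [ax2 _]; apply: ax2.
by move=> y; apply: Pact.
Qed.

Lemma qact_module : is_module (M := QM) mqact.
Proof.
have E H (q : Qz H) : q = qpi H (qval _ q) by rewrite qvalK.
case: hact => a1 [a2 [a3 [a4 [a5 [a6 [a7 a8]]]]]].
split; [|split; [|split; [|split; [|split; [|split; [|split]]]]]].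
- by move=> H a b m hH; rewrite (E _ m) !mqactE // a1 // qpiB.
- by move=> H a m n hH; rewrite (E _ m) (E _ n) -qpiB !mqactE // a2 // qpiB.
- by move=> H m hH; rewrite (E _ m) mqactE // a3.
- by move=> H a b m hH; rewrite (E _ m) !mqactE // a4.
- move=> H K a m hH hK; have hKG := subset_trans hK hH.
  by rewrite (E _ m) /= mqactE // !qresE // mqactE // a5.
- move=> g H K a m hH hg hK; have hKG := conj_sub _ _ _ hH hg hK.
  by rewrite (E _ m) /= mqactE // !qcjE // mqactE // a6.
- move=> H K a m hH hK; have hKG := subset_trans hK hH.
  by rewrite (E _ m) /= qresE // mqactE // qtrE // mqactE // a7.
- move=> H K a m hH hK; have hKG := subset_trans hK hH.
  by rewrite (E _ m) /= mqactE // qtrE // qtrE // mqactE // a8.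
Qed.
End QModule.
End MQuot.


Set Implicit Arguments.
Section DC.
Variable gT : finGroupType.
Implicit Types (H K L : {group gT}).

Lemma dcP (K L : {group gT}) y x :
  reflect (exists k, exists l, [/\ k \in K, l \in L & x = (k * y * l)%g]) (x \in (K :* y * L)%g).
Proof.
apply: (iffP idP).
  case/mulsgP=> a l /rcosetP [k kK ->] lL ->; by exists k, l.
case=> k [l [kK lL ->]]; apply: mem_mulg => //; apply/rcosetP; by exists k.
Qed.

Lemma dc_eq (K L : {group gT}) y h : y \in (K :* h * L)%g -> (K :* y * L)%g = (K :* h * L)%g.
Proof.
case/dcP=> k [l [kK lL ->]]; apply/setP=> x; apply/dcP/dcP.
  case=> k' [l' [k'K l'L ->]]; exists (k' * k)%g, (l * l')%g; split; rewrite ?groupM //.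
  by rewrite !mulgA.
case=> k' [l' [k'K l'L ->]]; exists (k' * k^-1)%g, (l^-1 * l')%g; split; rewrite ?groupM ?groupV //.
by rewrite !mulgA mulgKV mulgK.
Qed.

Lemma dc_self (K L : {group gT}) h : h \in (K :* h * L)%g.
Proof. apply/dcP; exists 1%g, 1%g; split; rewrite ?group1 //; by rewrite mul1g mulg1. Qed.

Lemma dc_reps (H K L : {group gT}) : K \subset H -> L \subset H ->
  exists X : {set gT}, X \subset H /\
    forall h, h \in H -> exists! y, y \in X /\ h \in (K :* y * L)%g.
Proof.
move=> sKH sLH.
exists [set repr (K :* h * L)%g | h in H]; split.
  apply/subsetP=> y /imsetP [h hH ->].
  have := mem_repr _ (dc_self K L h); case/dcP=> k [l [kK lL ->]].
  by rewrite !groupM // ?(subsetP sKH _ kK) ?(subsetP sLH _ lL).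
move=> h hH; exists (repr (K :* h * L)%g); split.
  split; first by apply/imsetP; exists h.
  by rewrite (dc_eq (mem_repr _ (dc_self K L h))) dc_self.
move=> y' [/imsetP [h' h'H ->] hin].
rewrite (dc_eq (mem_repr _ (dc_self K L h'))) in hin.
by rewrite (dc_eq hin).
Qed.
End DC.

Local Open Scope ring_scope.
Unset Implicit Arguments.

Section Gen.
Variables (gT : finGroupType) (G : {group gT}) (A B T : mackey G).
Variable mu : forall H : {group gT}, A H -> B H -> T H.
Hypothesis mures : forall (H K : {group gT}) m n, H \subset G -> K \subset H ->
  mres K (mu H m n) = mu K (mres K m) (mres K n).
Hypothesis mucj : forall g (H K : {group gT}) m n, H \subset G -> g \in G ->
  K :=: (H :^ g)%g -> mcj g K (mu H m n) = mu K (mcj g K m) (mcj g K n).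

Inductive gen : forall H : {group gT}, T H -> Prop :=
| gen0 H : gen H 0
| genB H x y : gen H x -> gen H y -> gen H (x - y)
| genT (H K : {group gT}) a b : K \subset H -> gen H (mtr H (mu K a b)).

Lemma genD H x y : gen H x -> gen H y -> gen H (x + y).
Proof.
move=> gx gy; have -> : x + y = x - (0 - y) by rewrite sub0r opprK.
by apply: genB => //; apply: genB => //; apply: gen0.
Qed.

Lemma gen_tr (K H : {group gT}) x : H \subset G -> K \subset H -> gen K x -> gen H (mtr H x).
Proof.
move=> hH hK gx; elim: gx H hH hK => {K x} [K|K x y _ IHx _ IHy|K K' a b sK'K] H hH hK.
- rewrite tr0 //; exact: gen0.
- rewrite (tr_sub (mk_ax T)) //; apply: genB; [exact: IHx | exact: IHy].
- rewrite (tr_comp (mk_ax T)) //; apply: genT; exact: subset_trans sK'K hK.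
Qed.

Lemma gen_cj g (H K : {group gT}) x : H \subset G -> g \in G -> K :=: (H :^ g)%g ->
  gen H x -> gen K (mcj g K x).
Proof.
move=> hH hg hK gx; elim: gx K hH hK => {H x} [H|H x y _ IHx _ IHy|H K' a b sK'H] K hH hK.
- rewrite cj0 //; exact: gen0.
- rewrite (cj_sub (mk_ax T)) //; apply: genB; [exact: IHx | exact: IHy].
- have sK'G := subset_trans sK'H hH.
  rewrite (cj_tr (mk_ax T) (H':=K) (K':=(K' :^ g)%G)) // mucj //.
  by apply: genT; rewrite hK conjSg.
Qed.

Lemma gen_res (H L : {group gT}) x : H \subset G -> L \subset H -> gen H x -> gen L (mres L x).
Proof.
move=> hH hL gx; elim: gx L hH hL => {H x} [H|H x y _ IHx _ IHy|H K a b sKH] L hH hL.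
- rewrite res0 //; exact: gen0.
- rewrite (res_sub (mk_ax T)) //; apply: genB; [exact: IHx | exact: IHy].
- have [X [sXH hX]] := dc_reps sKH hL.
  rewrite (mackey_formula (mk_ax T) _ hH sKH hL sXH hX).
  apply: (big_ind (gen L)); [exact: gen0 | exact: genD |] => y yX.
  have yH : y \in H by apply: (subsetP sXH).
  have yG : y \in G by apply: (subsetP hH).
  have hKG : K \subset G by exact: subset_trans sKH hH.
  have s1 : (K :&: L :^ y^-1)%G \subset K by rewrite /= subsetIl.
  have s2 : (K :^ y :&: L)%G \subset L by rewrite /= subsetIr.
  have e : (K :^ y :&: L)%G :=: ((K :&: L :^ y^-1)%G :^ y)%g by rewrite /= conjIg conjsgKV.
  have s1G : (K :&: L :^ y^-1)%G \subset G by exact: subset_trans s1 hKG.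
  rewrite mures // mucj //; exact: genT.
Qed.
End Gen.
Arguments gen [gT G A B T] mu H _.
Arguments gen0 [gT G A B T] mu H.
Arguments genB [gT G A B T] mu H x y _ _.
Arguments genT [gT G A B T] mu H K a b _.
Arguments gen_res [gT G A B T] mu mures mucj H L x _ _ _.
Arguments gen_tr [gT G A B T] mu K H x _ _ _.
Arguments gen_cj [gT G A B T] mu mucj g H K x _ _ _ _.

Section BoxAll.
Variables (gT : finGroupType) (G : {group gT}) (R : green G) (M N T : mackey G).
Variables (actM : forall H, R H -> M H -> M H) (actN : forall H, R H -> N H -> N H).
Variable mu : forall H : {group gT}, M H -> N H -> T H.
Hypothesis hbox : is_box_product actM actN mu.

Lemma zero_mackey (P : mackey G) : is_mackey_map (M := T) (N := P) (fun H _ => 0).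
Proof.
split.
- by move=> *; rewrite subr0.
- by move=> *; rewrite res0.
- by move=> *; rewrite tr0.
- by move=> *; rewrite cj0.
Qed.

Lemma box_all (P : forall H : {group gT}, T H -> Prop)
  (P0 : forall H : {group gT}, H \subset G -> P H 0)
  (PB : forall (H : {group gT}) x y, H \subset G -> P H x -> P H y -> P H (x - y))
  (Pres : forall (H K : {group gT}) x, H \subset G -> K \subset H -> P H x -> P K (mres K x))
  (Ptr : forall (K H : {group gT}) x, H \subset G -> K \subset H -> P K x -> P H (mtr H x))
  (Pcj : forall g (H K : {group gT}) x, H \subset G -> g \in G -> K :=: (H :^ g)%g ->
    P H x -> P K (mcj g K x))
  (Pmu : forall (H : {group gT}) m n, H \subset G -> P H (mu H m n)) :
  forall (H : {group gT}) t, H \subset G -> P H t.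
Proof.
pose Q := QM _ _ _ _ P0 PB Pres Ptr Pcj.
case: hbox => _ univ.
have bal : is_balanced_pairing (P := Q) actM actN (fun H _ _ => 0).
  split; [|split; [|split; [|split; [|split; [|split]]]]].
  - by move=> *; rewrite subr0.
  - by move=> *; rewrite subr0.
  - by [].
  - by move=> *; rewrite res0.
  - by move=> *; rewrite cj0.
  - by move=> *; rewrite tr0.
  - by move=> *; rewrite tr0.
have [h [hm hmu huniq]] := univ Q _ bal.
move=> H t hH.
have e1 := huniq (qpi _ _ _ _ P0 PB) (qpi_mackey _ _ _ _ P0 PB Pres Ptr Pcj).
have e2 := huniq (fun H _ => 0) (zero_mackey Q).
have : qpi _ _ _ _ P0 PB H t = 0.
  rewrite e1 //; last by move=> H' m n hH'; apply/qpi_eq0 => //; apply: Pmu.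
  rewrite -(e2 _ H t hH) //.
by move/qpi_eq0; apply.
Qed.
End BoxAll.

Section BoxGen.
Variables (gT : finGroupType) (G : {group gT}) (R : green G) (M N T : mackey G).
Variables (actM : forall H, R H -> M H -> M H) (actN : forall H, R H -> N H -> N H).
Variable mu : forall H : {group gT}, M H -> N H -> T H.
Hypothesis hbox : is_box_product actM actN mu.
Lemma box_gen : forall (H : {group gT}) t, H \subset G -> gen mu H t.
Proof.
case: (hbox) => [[_ [_ [_ [b4 [b5 _]]]]] _].
apply: (box_all _ _ _ _ _ _ _ _ _ hbox (gen mu)).
- by move=> *; apply: gen0.
- by move=> *; apply: genB.
- by move=> *; apply: (gen_res _ b4 b5).
- by move=> *; apply: gen_tr.
- by move=> *; apply: (gen_cj _ b5).
- move=> H m n hH; rewrite -(tr_id (mk_ax T) (mu H m n) hH); exact: genT.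
Qed.
End BoxGen.
Arguments box_gen [gT G R M N T actM actN mu] hbox H t _.

Section ModLemmas.
Variables (gT : finGroupType) (G : {group gT}) (S : green G) (M : mackey G).
Variable act : forall H : {group gT}, S H -> M H -> M H.
Hypothesis hm : is_module act.

Lemma act0r (H : {group gT}) s : H \subset G -> act H s 0 = 0.
Proof. case: hm => _ [a2 _] hH; have := a2 H s 0 0 hH; by rewrite !subrr. Qed.
Lemma actNr (H : {group gT}) s x : H \subset G -> act H s (- x) = - act H s x.
Proof. case: hm => _ [a2 _] hH; by rewrite -[- x]sub0r a2 // act0r // sub0r. Qed.
Lemma actDr (H : {group gT}) s x y : H \subset G -> act H s (x + y) = act H s x + act H s y.
Proof.
case: hm => _ [a2 _] hH; have -> : x + y = x - (- y) by rewrite opprK.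
by rewrite a2 // actNr // opprK.
Qed.
Lemma actBr (H : {group gT}) s x y : H \subset G -> act H s (x - y) = act H s x - act H s y.
Proof. by case: hm => _ [a2 _] hH; rewrite a2. Qed.
Lemma act0l (H : {group gT}) x : H \subset G -> act H 0 x = 0.
Proof. case: hm => a1 _ hH; have := a1 H 0 0 x hH; by rewrite !subrr. Qed.
Lemma actNl (H : {group gT}) s x : H \subset G -> act H (- s) x = - act H s x.
Proof. case: hm => a1 _ hH; by rewrite -[- s]sub0r a1 // act0l // sub0r. Qed.
Lemma actDl (H : {group gT}) s s' x : H \subset G -> act H (s + s') x = act H s x + act H s' x.
Proof.
case: hm => a1 _ hH; have -> : s + s' = s - (- s') by rewrite opprK.
by rewrite a1 // actNl // opprK.
Qed.
Lemma actBl (H : {group gT}) s s' x : H \subset G -> act H (s - s') x = act H s x - act H s' x.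
Proof. by case: hm => a1 _ hH; rewrite a1. Qed.
Lemma actMul (H : {group gT}) s s' x : H \subset G -> act H (s * s') x = act H s (act H s' x).
Proof. by case: hm => _ [_ [_ [a4 _]]] hH; rewrite a4. Qed.
Lemma act1 (H : {group gT}) x : H \subset G -> act H 1 x = x.
Proof. by case: hm => _ [_ [a3 _]] hH; rewrite a3. Qed.
End ModLemmas.
Arguments act0r [gT G S M act] hm.
Arguments actNr [gT G S M act] hm.
Arguments actDr [gT G S M act] hm.
Arguments actBr [gT G S M act] hm.
Arguments act0l [gT G S M act] hm.
Arguments actNl [gT G S M act] hm.
Arguments actDl [gT G S M act] hm.
Arguments actBl [gT G S M act] hm.
Arguments actMul [gT G S M act] hm.
Arguments act1 [gT G S M act] hm.

Section MapLemmas.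
Variables (gT : finGroupType) (G : {group gT}) (M N : mackey G).
Variable h : forall H : {group gT}, M H -> N H.
Hypothesis hh : is_mackey_map h.
Lemma map0 (H : {group gT}) : H \subset G -> h H 0 = 0.
Proof. case: hh => hB _ _ _ hH; have := hB H 0 0 hH; by rewrite !subrr. Qed.
Lemma mapB (H : {group gT}) x y : H \subset G -> h H (x - y) = h H x - h H y.
Proof. by case: hh => hB _ _ _ hH; rewrite hB. Qed.
Lemma mapN (H : {group gT}) x : H \subset G -> h H (- x) = - h H x.
Proof. move=> hH; by rewrite -[- x]sub0r mapB // map0 // sub0r. Qed.
Lemma mapD (H : {group gT}) x y : H \subset G -> h H (x + y) = h H x + h H y.
Proof. move=> hH; have -> : x + y = x - (- y) by rewrite opprK. by rewrite mapB // mapN // opprK. Qed.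
End MapLemmas.
Arguments map0 [gT G M N h] hh.
Arguments mapB [gT G M N h] hh.
Arguments mapN [gT G M N h] hh.
Arguments mapD [gT G M N h] hh.

Lemma comp_mackey (gT : finGroupType) (G : {group gT}) (M N P : mackey G)
  (h1 : forall H : {group gT}, M H -> N H) (h2 : forall H : {group gT}, N H -> P H) :
  is_mackey_map h1 -> is_mackey_map h2 -> is_mackey_map (fun H x => h2 H (h1 H x)).
Proof.
case=> a1 a2 a3 a4 [b1 b2 b3 b4]; split.
- by move=> *; rewrite a1 // b1.
- by move=> *; rewrite a2 // b2.
- by move=> *; rewrite a3 // b3.
- by move=> g H K x hH hg hK; rewrite a4 // b4.
Qed.

Unset Implicit Arguments. Set Strict Implicit. Set Printing Implicit Defensive.
Local Open Scope ring_scope.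


Theorem mainTheorem5 (gT : finGroupType) (G : {group gT})
  (R S : green G) (f : forall H, R H -> S H) (hf : is_green_map f)
  (T : mackey G) (mu : forall H, S H -> S H -> T H)
  (hT : is_box_product (M := green_mackey S) (N := green_mackey S)
          (fun H r s => f H r * s) (fun H r s => f H r * s) mu)
  (actT : forall H, S H -> T H -> T H) (hTmod : is_module actT)
  (hTact : forall (H : {group gT}) s a a', H \subset G ->
             actT H s (mu H a a') = mu H (s * a) a')
  (T3 : mackey G) (mu3 : forall H, T H -> S H -> T3 H)
  (hT3 : is_box_product (N := green_mackey S)
          (fun H r t => actT H (f H r) t) (fun H r s => f H r * s) mu3)
  (b : forall H, T3 H -> T H) (hb : is_mackey_map b)
  (hbdef : forall (H : {group gT}) (s1 s2 s3 : S H), H \subset G ->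
     b H (mu3 H (mu H s1 s2) s3) =
       mu H (s1 * s2) s3 - mu H s1 (s2 * s3) + mu H (s3 * s1) s2)
  (Om : mackey G) (actO : forall H, S H -> Om H -> Om H)
  (d : forall H, S H -> Om H) (hOm : is_kaehler f actO d) :
  exists phi : forall H, T H -> Om H,
    [/\ is_module_map actT actO phi,
        forall (H : {group gT}) (s1 s2 : S H), H \subset G ->
          phi H (mu H s1 s2) = actO H s1 (d H s2),
        forall (H : {group gT}) (y : Om H), H \subset G ->
          exists t, phi H t = y
      & forall (H : {group gT}) (t : T H), H \subset G ->
          phi H t = 0 <-> exists z, t = b H z].
Proof.
case: (hT) => balT univT.
have genT_all := box_gen hT.
have genT3_all := box_gen hT3.
case: (hOm) => modO derO univO.
case: (derO) => dM dfr dL.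
have [o1 [o2 [o3 [o4 [o5 [o6 [o7 o8]]]]]]] := modO.
case: (dM) => dB dres dtr dcj.
have balphi : is_balanced_pairing (M:=green_mackey S) (N:=green_mackey S) (P:=Om)
   (fun H r s => f H r * s) (fun H r s => f H r * s) (fun H s1 s2 => actO H s1 (d H s2)).
  split; [|split; [|split; [|split; [|split; [|split]]]]].
  - by move=> H m m' n hH /=; rewrite o1.
  - by move=> H m n n' hH /=; rewrite (mapB dM) // o2.
  - move=> H r m n hH /=; rewrite dL // dfr // (act0r modO) // addr0.
    by rewrite -(actMul modO) // mulrC.
  - move=> H K m n hH hK /=; rewrite o5 //; congr (actO _ _ _); by rewrite -dres.
  - move=> g H K m n hH hg hK /=; rewrite o6 //; congr (actO _ _ _); by rewrite -dcj.
  - move=> H K m n hH hK /=; rewrite (dres _ _ _ hH hK) o7 //.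
  - move=> H K m n hH hK /=; rewrite o8 // dtr //.
have [phi [phiM phimu _]] := univT Om _ balphi.
case: (phiM) => phB phres phtr phcj.
have [t1 [t2 [t3 [t4 [t5 [t6 [t7 t8]]]]]]] := hTmod.
case: (hb) => hbB hbres hbtr hbcj.
case: (hT3) => [[p31 [p32 [p33 [p34 [p35 [p36 p37]]]]]] _].
have phiact : forall (H : {group gT}) s t, H \subset G -> phi H (actT H s t) = actO H s (phi H t).
  move=> H s t hH; have gg := genT_all H t hH; elim: gg s hH => {H t} [H|H x y _ IHx _ IHy|H K a a' sKH] s hH.
  - by rewrite (act0r hTmod) // (map0 phiM) // (act0r modO).
  - by rewrite (actBr hTmod) // !(mapB phiM) // IHx // IHy // (actBr modO).
  - have hKG := subset_trans sKH hH.
    rewrite -t8 // hTact // !phtr // !phimu // -o8 // o4 //.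
have mu30 : forall (H : {group gT}) c, H \subset G -> mu3 H 0 c = 0.
  by move=> H c hH; have := p31 H 0 0 c hH; rewrite !subrr.
have phib_mu3 : forall (K : {group gT}) (t : T K) c, K \subset G -> phi K (b K (mu3 K t c)) = 0.
  move=> K t c hK; have gg := genT_all K t hK; elim: gg c hK => {K t} [K|K x y _ IHx _ IHy|K L a a' sLK] c hK.
  - by rewrite mu30 // (map0 hb) // (map0 phiM).
  - by rewrite p31 // (mapB hb) // (mapB phiM) // IHx // IHy // subrr.
  - have hLG := subset_trans sLK hK.
    rewrite -p36 // hbtr // phtr // hbdef // (mapD phiM) // (mapB phiM) // !phimu //.
    rewrite dL // (actDr modO) // -!(actMul modO) // [_ * a]mulrC.
    by rewrite opprD addrA subrr sub0r addNr (tr0 Om).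
have phib0 : forall (H : {group gT}) z, H \subset G -> phi H (b H z) = 0.
  move=> H z hH; have gg := genT3_all H z hH; elim: gg hH => {H z} [H|H x y _ IHx _ IHy|H K t c sKH] hH.
  - by rewrite (map0 hb) // (map0 phiM).
  - by rewrite (mapB hb) // (mapB phiM) // IHx // IHy // subrr.
  - have hKG := subset_trans sKH hH.
    by rewrite hbtr // phtr // phib_mu3 // (tr0 Om).
have stabmu3 : forall (K : {group gT}) (s : S K) (t : T K) c, K \subset G ->
    exists z, actT K s (b K (mu3 K t c)) = b K z.
  move=> K s t c hK; have gg := genT_all K t hK; elim: gg s c hK => {K t} [K|K x y _ IHx _ IHy|K L a a' sLK] s c hK.
  - by exists 0; rewrite mu30 // (map0 hb) // (act0r hTmod).
  - have [z1 e1] := IHx s c hK; have [z2 e2] := IHy s c hK.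
    by exists (z1 - z2); rewrite p31 // (mapB hb) // (actBr hTmod) // e1 e2 (mapB hb).
  - have hLG := subset_trans sLK hK.
    exists (mtr K (mu3 L (mu L (gres L s * a) a') (gres L c))).
    rewrite -p36 // !hbtr // -t8 //; congr (mtr K _).
    rewrite !hbdef // (actDr hTmod) // (actBr hTmod) // !hTact //.
    change (mres (m:=green_mackey S) L c) with (gres L c).
    by rewrite mulrA [gres L c * (_ * a)]mulrCA.
have stab : forall (H : {group gT}) (s : S H) z, H \subset G -> exists z', actT H s (b H z) = b H z'.
  move=> H s z hH; have gg := genT3_all H z hH; elim: gg s hH => {H z} [H|H x y _ IHx _ IHy|H K t c sKH] s hH.
  - by exists 0; rewrite (map0 hb) // (act0r hTmod).
  - have [z1 e1] := IHx s hH; have [z2 e2] := IHy s hH.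
    by exists (z1 - z2); rewrite (mapB hb) // (actBr hTmod) // e1 e2 (mapB hb).
  - have hKG := subset_trans sKH hH.
    have [z0 e0] := stabmu3 K (gres K s) t c hKG.
    by exists (mtr H z0); rewrite hbtr // -t8 // e0 hbtr.
pose P := fun (H : {group gT}) (t : T H) => exists z, t = b H z.
have P0 : forall H : {group gT}, H \subset G -> P H 0.
  by move=> H hH; exists 0; rewrite (map0 hb).
have PB : forall (H : {group gT}) x y, H \subset G -> P H x -> P H y -> P H (x - y).
  by move=> H x y hH [z1 ->] [z2 ->]; exists (z1 - z2); rewrite hbB.
have Pres : forall (H K : {group gT}) x, H \subset G -> K \subset H -> P H x -> P K (mres K x).
  by move=> H K x hH hK [z ->]; exists (mres K z); rewrite hbres.
have Ptr : forall (K H : {group gT}) x, H \subset G -> K \subset H -> P K x -> P H (mtr H x).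
  by move=> K H x hH hK [z ->]; exists (mtr H z); rewrite hbtr.
have Pcj : forall g (H K : {group gT}) x, H \subset G -> g \in G -> K :=: (H :^ g)%g ->
    P H x -> P K (mcj g K x).
  by move=> g H K x hH hg hK [z ->]; exists (mcj g K z); rewrite hbcj.
have Pact : forall (H : {group gT}) (s : S H) (x : T H), H \subset G -> P H x -> P H (actT H s x).
  move=> H s x hH [z ->]; have [z' e] := stab H s z hH; by exists z'.
pose Q := QM _ _ _ _ P0 PB Pres Ptr Pcj.
pose pi := qpi _ _ _ _ P0 PB.
pose actQ := mqact _ _ _ _ P0 PB Pres Ptr Pcj S actT.
have modQ : is_module (M := Q) actQ := qact_module _ _ _ _ P0 PB Pres Ptr Pcj S actT hTmod Pact.
have piM : is_mackey_map (M := T) (N := Q) pi := qpi_mackey _ _ _ _ P0 PB Pres Ptr Pcj.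
case: (piM) => piB pires pitr picj.
have actQE : forall (H : {group gT}) s x, H \subset G -> actQ H s (pi H x) = pi H (actT H s x).
  by move=> H s x hH; exact: (mqactE _ _ _ _ P0 PB Pres Ptr Pcj S actT hTmod Pact H s x hH).
have [r1 r2 r3 r4 r5] := g_green S.
case: (balT) => [b1 [b2 [b3 [b4 [b5 [b6 b7]]]]]].
pose delta := fun (H : {group gT}) (s : S H) => pi H (mu H 1 s).
have derQ : is_derivation f (M := Q) actQ delta.
  split.
  - split.
    + by move=> H x y hH; rewrite /delta b2 // piB.
    + move=> H K x hH hK; rewrite /delta -pires // b4 //=.
      by rewrite r1.
    + move=> K H x hH hK; rewrite /delta -pitr //.
      have hKG := subset_trans hK hH.
      by rewrite -{1}(r1 H K) // -b7.
    + move=> g H K x hH hg hK; rewrite /delta -picj // b5 //=.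
      by rewrite r3.
  - move=> H r hH; rewrite /delta; apply/qpi_eq0 => //.
    have e1 := b3 H r 1 1 hH; rewrite /= !mulr1 in e1.
    rewrite -e1.
    have e2 := hTact H (f H r) 1 1 hH; rewrite mulr1 in e2; rewrite -e2.
    have e3 := hbdef H 1 1 1 hH; rewrite !mulr1 subrr add0r in e3.
    rewrite -e3; apply: Pact => //; by exists (mu3 H (mu H 1 1) 1).
  - move=> H x y hH; rewrite /delta !actQE // !hTact // !mulr1 -(qpiD _ _ _ _ P0 PB).
    apply/qpiP => //; exists (- mu3 H (mu H 1 x) y).
    rewrite (mapN hb) // hbdef // !mul1r mulr1.
    by rewrite !opprD !opprK addrA [mu H 1 (x * y) - _]addrC.
have [psi [[psiM psiact] psid _]] := univO Q actQ delta modQ derQ.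
pose qv := qval _ _ _ _ P0 PB.
have qvK : forall (H : {group gT}) (q : Q H), pi H (qv H q) = q.
  by move=> H q; exact: (qvalK _ _ _ _ P0 PB H q).
pose phib := fun (H : {group gT}) (q : Q H) => phi H (qv H q).
have phibE : forall (H : {group gT}) x, H \subset G -> phib H (pi H x) = phi H x.
  move=> H x hH; have [z e] := qval_pi _ _ _ _ P0 PB H x hH.
  apply/eqP; rewrite -subr_eq0; apply/eqP.
  by rewrite /phib -(mapB phiM) // -/qv e phib0.
have phibM : is_mackey_map (M := Q) (N := Om) phib.
  split.
  - move=> H x y hH; rewrite -(qvK H x) -(qvK H y) -piB // !phibE //.
    by rewrite (mapB phiM).
  - move=> H K x hH hK; have hKG := subset_trans hK hH.
    by rewrite -(qvK H x) -pires // !phibE // phres.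
  - move=> K H x hH hK; have hKG := subset_trans hK hH.
    by rewrite -(qvK K x) -pitr // !phibE // phtr.
  - move=> g H K x hH hg hK; have hKG := conj_sub _ _ _ _ _ hH hg hK.
    by rewrite -(qvK H x) -picj // !phibE // phcj.
have phibact : forall (H : {group gT}) s q, H \subset G -> phib H (actQ H s q) = actO H s (phib H q).
  move=> H s q hH; by rewrite -(qvK H q) actQE // !phibE // phiact.
have idO : forall (H : {group gT}) (y : Om H), H \subset G -> phib H (psi H y) = y.
  have [h0 [_ _ h0u]] := univO Om actO d modO derO.
  move=> H y hH.
  have mm : is_module_map (M := Om) (N := Om) actO actO (fun H y => phib H (psi H y)).
    split; first exact: (comp_mackey _ _ _ _ _ _ _ psiM phibM).
    by move=> H' a m hH'; rewrite psiact // phibact.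
  have md : forall (H : {group gT}) a, H \subset G -> phib H (psi H (d H a)) = d H a.
    by move=> H' a hH'; rewrite psid // /delta phibE // phimu // o3.
  have mmid : is_module_map (M := Om) (N := Om) actO actO (fun H y => y).
    by split => //; split.
  have e1 := h0u _ mm md H y hH.
  have e2 := h0u (fun H y => y) mmid (fun _ _ _ => erefl) H y hH.
  by rewrite /= in e1 e2; rewrite e1 -e2.
have balpi : is_balanced_pairing (M:=green_mackey S) (N:=green_mackey S) (P:=Q)
   (fun H r s => f H r * s) (fun H r s => f H r * s) (fun H s1 s2 => pi H (mu H s1 s2)).
  split; [|split; [|split; [|split; [|split; [|split]]]]].
  - by move=> H m m' n hH /=; rewrite b1 // piB.
  - by move=> H m n n' hH /=; rewrite b2 // piB.
  - by move=> H r m n hH /=; rewrite b3.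
  - by move=> H K m n hH hK; rewrite -pires // b4.
  - by move=> g H K m n hH hg hK; rewrite -picj // b5.
  - by move=> H K m n hH hK; rewrite -pitr // b6.
  - by move=> H K m n hH hK; rewrite -pitr // b7.
have pieq : forall (H : {group gT}) t, H \subset G -> psi H (phi H t) = pi H t.
  have [h1 [_ _ h1u]] := univT Q _ balpi.
  move=> H t hH.
  have md : forall (H : {group gT}) m n, H \subset G -> psi H (phi H (mu H m n)) = pi H (mu H m n).
    by move=> H' m n hH'; rewrite phimu // psiact // psid // /delta actQE // hTact // mulr1.
  have e1 := h1u _ (comp_mackey _ _ _ _ _ _ _ phiM psiM) md H t hH.
  have e2 := h1u pi piM (fun _ _ _ _ => erefl) H t hH.
  by rewrite /= in e1 e2; rewrite e1 -e2.
exists phi; split.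
- by split.
- by move=> H s1 s2 hH; rewrite phimu.
- by move=> H y hH; exists (qv H (psi H y)); rewrite -/(phib H _) idO.
- move=> H t hH; split.
  + move=> e; have := pieq H t hH; rewrite e (map0 psiM) // => /esym.
    by move/(qpi_eq0 _ _ _ _ P0 PB H t hH).
  + by case=> z ->; rewrite phib0.
Qed.
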